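(* Let $\mathcal{A}=\langle L,\mathcal{X},E\rangle$ be a timed automaton with $n$ clocks and $\ell_0,\ell\in L$. Then $$\{\nu\in\mathbb{R}_{\ge0}^{\mathcal{X}}: \text{there is a run of }\mathcal{A}\text{ from }\langle\ell_0,\mathbf{0}\rangle\text{ to }\langle\ell,\nu\rangle\}=\bigcup_{Z\in\mathcal{Z}_1(\mathcal{X})}\ \bigcup_{\gamma\subseteq\mathcal{X}}\{\upsilon+\mu:\mu\in Z,\ \upsilon\in\mathbb{N}^{\mathcal{X}},\ \langle\ell_0,\mathbf{0},\{\mathbf{0}\},\gamma\rangle\to^*\langle\ell,\upsilon,Z,\emptyset\rangle\text{ in }R(\mathcal{A})\},$$ where $\to^*$ denotes existence of a run of $R(\mathcal{A})$ (on any word).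
   Context: Let $\mathcal{X}$ be a finite set of clocks. Clock constraints $\Phi(\mathcal{X})$ are generated by $\varphi ::= \mathbf{true}\mid x<k\mid x=k\mid x>k\mid \varphi\wedge\varphi$ with $k\in\mathbb{N}$, $x\in\mathcal{X}$. A clock valuation is a map $\nu:\mathcal{X}\to\mathbb{R}_{\ge0}$; $\nu\models\varphi$ denotes satisfaction; $\mathbf{0}$ is the all-zero valuation; $(\nu+t)(x)=\nu(x)+t$ for $t\ge0$; for $\lambda\subseteq\mathcal{X}$, $\nu[\lambda\leftarrow0]$ sets clocks in $\lambda$ to $0$ and leaves others unchanged. A timed automaton is $\mathcal{A}=\langle L,\mathcal{X},E\rangle$ with finite location set $L$, finite clock set $\mathcal{X}$, and edges $E\subseteq L\times\Phi(\mathcal{X})\times2^{\mathcal{X}}\times L$. A configuration is a pair $\langle\ell,\nu\rangle$. Transitions: delay $\langle\ell,\nu\rangle\xrightarrow{d}\langle\ell,\nu+d\rangle$ for $d\ge0$; discrete $\langle\ell,\nu\rangle\xrightarrow{0}\langle\ell',\nu[\lambda\leftarrow0]\rangle$ whenever $\langle\ell,\varphi,\lambda,\ell'\rangle\in E$ and $\nu\models\varphi$. A run is a finite (possibly empty) sequence of consecutive transitions. A 1-bounded zone is a subset of $[0,1]^{\mathcal{X}}$ defined by a finite conjunction of constraints $x_i\bowtie c$ and $x_i-x_j\bowtie c$ with $c\in\{-1,0,1\}$ and $\bowtie\in\{<,\le,=,\ge,>\}$; $\mathcal{Z}_1(\mathcal{X})$ is the (finite) set of 1-bounded zones. For a set $Z$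 of valuations, $Z[\lambda\leftarrow0]=\{\nu[\lambda\leftarrow0]:\nu\in Z\}$ and $\overrightarrow{Z}=\{\nu+t:\nu\in Z,t\ge0\}\cap[0,1]^{\mathcal{X}}$; $[\![x=1]\!]$ is the set of valuations with $x=1$; for $\upsilon\in\mathbb{N}^{\mathcal{X}}$, $\upsilon[x\leftarrow x+1]$ increments coordinate $x$ by one. The automaton $R(\mathcal{A})$ is the (infinite-state, nondeterministic, with $\varepsilon$-transitions) automaton over alphabet $\mathcal{X}$ with states $Q=L\times\mathbb{N}^{\mathcal{X}}\times\mathcal{Z}_1(\mathcal{X})\times2^{\mathcal{X}}$ and transitions: (1) delay: $\langle\ell,\upsilon,Z,\gamma\rangle\xrightarrow{\varepsilon}\langle\ell,\upsilon,\overrightarrow{Z},\gamma\rangle$; (2) wrapping, for each $x\in\mathcal{X}$: $\langle\ell,\upsilon,Z,\gamma\rangle\xrightarrow{\sigma}\langle\ell,\upsilon[x\leftarrow x+1],(Z\cap[\![x=1]\!])[x\leftarrow0],\gamma\rangle$, where $\sigma=\varepsilon$ if $x\in\gamma$ and $\sigma=x$ otherwise; (3) for each edge $\langle\ell,\varphi,\lambda,\ell'\rangle\in E$ and each $\gamma'$ with $\gamma'\cup\lambda=\gamma$: $\langle\ell,\upsilon,Z,\gamma\rangle\xrightarrow{\varepsilon}\langle\ell',\upsilon[\lambda\leftarrow0],\{\nu\in Z:\upsilon+\nu\models\varphi\}[\lambda\leftarrow0],\gamma'\rangle$. *)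

(* Defs.v *)
From mathcomp Require Import all_boot.
From Stdlib Require Import Reals ZArith.
From Stdlib Require List.
From Stdlib Require Import Relations.

Set Implicit Arguments.
Unset Strict Implicit.
Unset Printing Implicit Defensive.

Section TA.
Variable X : finType.
Variable L : finType.

Definition valuation := X -> R.
Definition val_nonneg (nu : valuation) : Prop := forall x, (0 <= nu x)%R.
Definition val0 : valuation := fun _ => 0%R.
Definition vdelay (nu : valuation) (t : R) : valuation := fun x => (nu x + t)%R.
Definition vreset (nu : valuation) (lam : {set X}) : valuation :=
  fun x => if x \in lam then 0%R else nu x.

Inductive guard : Type :=
| GTrue
| GLt of X & nat
| GEq of X & nat
| GGt of X & nat
| GAnd of guard & guard.

Fixpoint gsat (g : guard) (nu : valuation) : Prop :=
  match g with
  | GTrue => True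
  | GLt x k => (nu x < INR k)%R
  | GEq x k => nu x = INR k
  | GGt x k => (nu x > INR k)%R
  | GAnd g1 g2 => gsat g1 nu /\ gsat g2 nu
  end.

Definition edge := (L * guard * {set X} * L)%type.
Definition timed_automaton := list edge.

Inductive ta_step (A : timed_automaton) : L * valuation -> L * valuation -> Prop :=
| TA_delay l nu d : (0 <= d)%R -> ta_step A (l, nu) (l, vdelay nu d)
| TA_edge l g lam l' nu :
    List.In (l, g, lam, l') A -> gsat g nu -> ta_step A (l, nu) (l', vreset nu lam).

Definition ta_reach (A : timed_automaton) := clos_refl_trans _ (ta_step A).

Inductive cmp := CLt | CLe | CEq | CGe | CGt.
Definition cmpR (o : cmp) (a b : R) : Prop :=
  match o with
  | CLt => (a < b)%R | CLe => (a <= b)%R | CEq => a = b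
  | CGe => (a >= b)%R | CGt => (a > b)%R end.

Inductive zcons : Type :=
| ZC1 of X & cmp & Z
| ZC2 of X & X & cmp & Z.

Definition zcons_ok (c : zcons) : Prop :=
  match c with
  | ZC1 _ _ k | ZC2 _ _ _ k => (-1 <= k <= 1)%Z end.

Definition zsat (c : zcons) (nu : valuation) : Prop :=
  match c with
  | ZC1 x o k => cmpR o (nu x) (IZR k)
  | ZC2 x y o k => cmpR o (nu x - nu y)%R (IZR k)
  end.

Definition in_unit (nu : valuation) : Prop := forall x, (0 <= nu x <= 1)%R.

Definition is_zone1 (Zn : valuation -> Prop) : Prop :=
  exists cs : list zcons,
    (forall c, List.In c cs -> zcons_ok c) /\
    (forall nu, Zn nu <-> (in_unit nu /\ forall c, List.In c cs -> zsat c nu)).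

Definition set_eq (A B : valuation -> Prop) : Prop := forall nu, A nu <-> B nu.

Definition ivec := X -> nat.
Definition ivec0 : ivec := fun _ => 0%nat.
Definition iincr (u : ivec) (x : X) : ivec := fun y => if y == x then S (u y) else u y.
Definition ireset (u : ivec) (lam : {set X}) : ivec := fun y => if y \in lam then 0%nat else u y.
Definition iplus (u : ivec) (nu : valuation) : valuation := fun x => (INR (u x) + nu x)%R.

Record rstate := RState {
  rs_loc : L; rs_int : ivec; rs_zone : valuation -> Prop; rs_gam : {set X} }.

Definition zero_zone : valuation -> Prop := fun nu => forall x, nu x = 0%R.

Definition future (Zn : valuation -> Prop) : valuation -> Prop :=
  fun nu => in_unit nu /\ exists nu0 t, Zn nu0 /\ (0 <= t)%R /\ forall x, nu x = (nu0 x + t)%R.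

Definition wrap (Zn : valuation -> Prop) (x : X) : valuation -> Prop :=
  fun nu => exists nu0, Zn nu0 /\ nu0 x = 1%R /\ forall y, nu y = vreset nu0 [set x] y.

Definition guard_reset (Zn : valuation -> Prop) (u : ivec) (g : guard) (lam : {set X})
  : valuation -> Prop :=
  fun nu => exists nu0, Zn nu0 /\ gsat g (iplus u nu0) /\ forall y, nu y = vreset nu0 lam y.

(* labels: None = epsilon, Some x = letter x. Zones are sets of valuations, so
   the target zone is any (1-bounded zone) predicate extensionally equal to the
   computed set. *)
Inductive r_step (A : timed_automaton) : rstate -> option X -> rstate -> Prop :=
| R_delay l u Zn g Zn' :
    is_zone1 Zn' -> set_eq Zn' (future Zn) ->
    r_step A (RState l u Zn g) None (RState l u Zn' g)
| R_wrap l u Zn g x Zn' :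
    is_zone1 Zn' -> set_eq Zn' (wrap Zn x) ->
    r_step A (RState l u Zn g) (if x \in g then None else Some x)
             (RState l (iincr u x) Zn' g)
| R_edge l u Zn g phi lam l' g' Zn' :
    List.In (l, phi, lam, l') A -> g' :|: lam = g ->
    is_zone1 Zn' -> set_eq Zn' (guard_reset Zn u phi lam) ->
    r_step A (RState l u Zn g) None (RState l' (ireset u lam) Zn' g').

Definition r_reach (A : timed_automaton) : rstate -> rstate -> Prop :=
  clos_refl_trans _ (fun s t => exists a, r_step A s a t).

End TA.

(* Main.v *)
Require Import Defs.
From mathcomp Require Import all_boot.
From Stdlib Require Import Reals.
From Stdlib Require Import Lra Lia ZArith FunctionalExtensionality.
From Stdlib Require List.
From Stdlib Require Import Relations.
Require Import Defs.
Set Implicit Arguments.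
Unset Strict Implicit.
Unset Printing Implicit Defensive.
Local Open Scope R_scope.



Definition lsat (p : R * bool) r := if p.2 then p.1 < r else p.1 <= r.
Definition usat (q : R * bool) r := if q.2 then r < q.1 else r <= q.1.
Definition compat (p q : R * bool) := if p.2 || q.2 then p.1 < q.1 else p.1 <= q.1.

Lemma list_max (T : Type) (D : T -> T -> Prop) :
  (forall x, D x x) -> (forall x y z, D x y -> D y z -> D x z) ->
  (forall x y, D x y \/ D y x) ->
  forall l x0, List.In x0 l -> exists m, List.In m l /\ forall p, List.In p l -> D m p.
Proof.
move=> Hr Ht Hto; elim=> [|x t IH] x0 //= Hx0.
case: t IH {Hx0} => [|y t] IH.
  exists x; split; first by left. by move=> p [<-|[]].
have [m [Hm Hmp]] := IH y (or_introl erefl).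
case: (Hto x m) => Hxm.
- exists x; split; first by left.
  move=> p [<-|Hp]; first exact: Hr. exact: Ht Hxm (Hmp p Hp).
- exists m; split; first by right.
  move=> p [<-|Hp]; first exact: Hxm. exact: Hmp.
Qed.

Lemma interval lo up :
  (forall p q, List.In p lo -> List.In q up -> compat p q) ->
  exists r, (forall p, List.In p lo -> lsat p r) /\ (forall q, List.In q up -> usat q r).
Proof.
move=> Hc.
pose DL := fun p q : R * bool => forall r, lsat p r -> lsat q r.
pose DU := fun p q : R * bool => forall r, usat p r -> usat q r.
have HL : forall l x0, List.In x0 l -> exists m, List.In m l /\ forall p, List.In p l -> DL m p.
  apply: list_max => [x r //|x y z H1 H2 r Hr|[a s] [b t]]; first by apply: H2; apply: H1.
  rewrite /DL /lsat /=.
  case: (Rtotal_order a b) => [Hab|[->|Hab]].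
  - right => r; case: s; case: t => /=; lra.
  - case: t; [right|left] => r; case: s => /=; lra.
  - left => r; case: s; case: t => /=; lra.
have HU : forall l x0, List.In x0 l -> exists m, List.In m l /\ forall p, List.In p l -> DU m p.
  apply: list_max => [x r //|x y z H1 H2 r Hr|[a s] [b t]]; first by apply: H2; apply: H1.
  rewrite /DU /usat /=.
  case: (Rtotal_order a b) => [Hab|[->|Hab]].
  - left => r; case: s; case: t => /=; lra.
  - case: t; [right|left] => r; case: s => /=; lra.
  - right => r; case: s; case: t => /=; lra.
case: lo Hc => [|p0 lo] Hc.
  case: up Hc => [|q0 up] Hc; first by exists 0.
  have [m [Hm Hmp]] := HU (q0 :: up) q0 (or_introl erefl).
  exists (m.1 - 1); split=> // q Hq; apply: Hmp => //; rewrite /usat; case: m.2; lra.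
case: up Hc => [|q0 up] Hc.
  have [m [Hm Hmp]] := HL (p0 :: lo) p0 (or_introl erefl).
  exists (m.1 + 1); split=> // p Hp; apply: Hmp => //; rewrite /lsat; case: m.2; lra.
have [m [Hm Hmp]] := HL (p0 :: lo) p0 (or_introl erefl).
have [M [HM HMp]] := HU (q0 :: up) q0 (or_introl erefl).
have := Hc m M Hm HM; rewrite /compat.
case E: (m.2 || M.2) => H.
- exists ((m.1 + M.1) / 2); split=> [p Hp|q Hq]; [apply: Hmp|apply: HMp] => //;
  rewrite ?/lsat ?/usat; [case: m.2|case: M.2]; lra.
- move/negbT: E; rewrite negb_or => /andP [/negbTE E1 /negbTE E2].
  exists m.1; split=> [p Hp|q Hq]; [apply: Hmp|apply: HMp] => //;
  rewrite ?/lsat ?/usat ?E1 ?E2; lra.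
Qed.


Section DBM.
Variable V : eqType.
Record dc := DC { di : V; dj : V; ds : bool; dk : Z }.
Definition dsat (a : V -> R) (c : dc) : Prop :=
  if ds c then a (di c) - a (dj c) < IZR (dk c) else a (di c) - a (dj c) <= IZR (dk c).
Definition dsatl a S := forall c, List.In c S -> dsat a c.
Definition updV (a : V -> R) v r := fun w => if w == v then r else a w.

Definition is_up v c := (di c == v) && (dj c != v).
Definition is_lo v c := (dj c == v) && (di c != v).
Definition fm_keep (z v : V) c :=
  if (di c == v) && (dj c == v) then DC z z (ds c) (dk c) else c.
Definition pairc l u := DC (di l) (dj u) (ds l || ds u) (dk l + dk u).
Definition elim (z v : V) S :=
  List.map (fm_keep z v) (List.filter (fun c => ~~ is_up v c && ~~ is_lo v c) S) ++
  List.flat_map (fun l => List.map (pairc l) (List.filter (is_up v) S))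
    (List.filter (is_lo v) S).

Lemma dsatl_app a S1 S2 : dsatl a (S1 ++ S2) <-> dsatl a S1 /\ dsatl a S2.
Proof.
split=> [H|[H1 H2] c]; first by split=> c Hc; apply: H; apply: List.in_or_app; tauto.
by move=> Hc; case: (List.in_app_or _ _ _ Hc) => Hc'; [apply: H1|apply: H2].
Qed.

Lemma dsat_ext a b c : (forall v, a v = b v) -> dsat a c -> dsat b c.
Proof. by move=> E; rewrite /dsat !E. Qed.
Lemma dsatl_ext a b S : (forall v, a v = b v) -> dsatl a S -> dsatl b S.
Proof. by move=> E H c Hc; apply: dsat_ext E (H c Hc). Qed.

Lemma elim_sound z v S a r : z != v ->
  dsatl (updV a v r) S -> dsatl a (elim z v S).
Proof.
move=> Hz H c Hc; case: (List.in_app_or _ _ _ Hc).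
- move/List.in_map_iff; case=> c0 [<- /List.filter_In [Hc0 /andP[Hu Hl]]].
  have := H c0 Hc0; rewrite /fm_keep /dsat /updV.
  case: c0 Hc0 Hu Hl => i j s k /= _; rewrite /is_up /is_lo /=.
  case: (i =P v) => [->|Hi]; case: (j =P v) => [->|Hj] //=; rewrite ?eqxx ?(negbTE Hz) //=.
  by move=> _ _; case: s; lra.
- move/List.in_flat_map; case=> l [/List.filter_In [Hl Hlo]].
  move/List.in_map_iff; case=> u [<- /List.filter_In [Hu Hup]].
  move: (H l Hl) (H u Hu); rewrite /dsat /pairc /updV /=.
  move: Hlo Hup; rewrite /is_lo /is_up => /andP[/eqP-> /negbTE->] /andP[/eqP-> /negbTE->].
  rewrite eqxx plus_IZR; case: (ds l); case: (ds u) => /=; lra.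
Qed.

Lemma elim_complete z v S a : z != v ->
  dsatl a (elim z v S) -> exists r, dsatl (updV a v r) S.
Proof.
move=> Hz H.
pose lo := List.map (fun l => (a (di l) - IZR (dk l), ds l)) (List.filter (is_lo v) S).
pose up := List.map (fun u => (a (dj u) + IZR (dk u), ds u)) (List.filter (is_up v) S).
have [r [Hr1 Hr2]] : exists r, (forall p, List.In p lo -> lsat p r) /\
    (forall q, List.In q up -> usat q r).
  apply: interval => p q /List.in_map_iff [l [<- Hl]] /List.in_map_iff [u [<- Hu]].
  have : dsat a (pairc l u).
    apply: H; apply: List.in_or_app; right; apply/List.in_flat_map; exists l; split=> //.
    by apply: List.in_map.
  move: Hl Hu => /List.filter_In [_ Hlo] /List.filter_In [_ Hup].
  rewrite /dsat /compat /pairc /= plus_IZR.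
  case: (ds l); case: (ds u) => /=; lra.
exists r => c Hc; rewrite /dsat /updV.
case Hup: (is_up v c).
  have := Hr2 _ (List.in_map (fun u => (a (dj u) + IZR (dk u), ds u)) _ _ (proj2 (List.filter_In _ _ _) (conj Hc Hup))).
  move: Hup; rewrite /is_up /usat /= => /andP[/eqP-> /negbTE->]; rewrite eqxx.
  case: (ds c); lra.
case Hlo: (is_lo v c).
  have := Hr1 _ (List.in_map (fun l => (a (di l) - IZR (dk l), ds l)) _ _ (proj2 (List.filter_In _ _ _) (conj Hc Hlo))).
  move: Hlo; rewrite /is_lo /lsat /= => /andP[/eqP-> /negbTE->]; rewrite eqxx.
  case: (ds c); lra.
have Hk : dsat a (fm_keep z v c).
  apply: H; apply: List.in_or_app; left; apply: List.in_map.
  by apply/List.filter_In; rewrite Hup Hlo.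
move: Hk Hup Hlo; case: c Hc => i j s k _; rewrite /fm_keep /dsat /is_up /is_lo /=.
case: (i =P v) => [->|Hi]; case: (j =P v) => [->|Hj] //=; rewrite ?eqxx /=.
by case: s; lra.
Qed.

Lemma elim_vars (Q : V -> Prop) z v S : Q z ->
  (forall c, List.In c S -> Q (di c) /\ Q (dj c)) ->
  forall c, List.In c (elim z v S) -> Q (di c) /\ Q (dj c).
Proof.
move=> Hz HS c Hc; case: (List.in_app_or _ _ _ Hc).
- move/List.in_map_iff; case=> c0 [<- /List.filter_In [Hc0 _]].
  rewrite /fm_keep; case: ifP => _ //=; exact: HS.
- move/List.in_flat_map; case=> l [/List.filter_In [Hl _]].
  move/List.in_map_iff; case=> u [<- /List.filter_In [Hu _]].
  by rewrite /pairc /=; split; [apply: (HS l Hl).1|apply: (HS u Hu).2].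
Qed.

Lemma elim_nov z v S : z != v ->
  forall c, List.In c (elim z v S) -> di c != v /\ dj c != v.
Proof.
move=> Hz c Hc; case: (List.in_app_or _ _ _ Hc).
- move/List.in_map_iff; case=> c0 [<- /List.filter_In [Hc0 /andP[Hu Hl]]].
  move: Hu Hl; case: c0 Hc0 => i j s k _; rewrite /fm_keep /is_up /is_lo /=.
  case: (i =P v) => [->|Hi]; case: (j =P v) => [->|Hj] //=; rewrite ?eqxx //=.
  by move=> _ _; split; apply/eqP.
- move/List.in_flat_map; case=> l [/List.filter_In [Hl Hlo]].
  move/List.in_map_iff; case=> u [<- /List.filter_In [Hu Hup]].
  move: Hlo Hup; rewrite /pairc /is_lo /is_up /= => /andP[_ ->] /andP[_ ->]; done.
Qed.
End DBM.


Lemma in_list (T : eqType) (x : T) (s : seq T) : x \in s -> List.In x s.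
Proof. elim: s => //= y s IH; rewrite in_cons => /orP [/eqP->|H]; [by left|by right; apply: IH]. Qed.

Section Zones.
Variable X : finType.
Notation V := (option (option X)).
Definition T0 : V := Some None.
Definition CC (x : X) : V := Some (Some x).
Definition emb (mu : X -> R) : V -> R :=
  fun v => match v with Some (Some x) => mu x | _ => 0 end.

Definition mkc (i j : V) o k : seq (dc V) :=
  match o with
  | CLt => [:: DC i j true k] | CLe => [:: DC i j false k]
  | CEq => [:: DC i j false k; DC j i false (- k)]
  | CGe => [:: DC j i false (- k)] | CGt => [:: DC j i true (- k)] end.

Lemma dsatl_cons (a : V -> R) c S : dsatl a (c :: S) <-> dsat a c /\ dsatl a S.
Proof.
split=> [H|[H1 H2] d [<-|Hd]] //; last exact: H2.
by split; [apply: H; left|move=> d Hd; apply: H; right].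
Qed.
Lemma dsatl_nil (a : V -> R) : dsatl a [::].
Proof. by []. Qed.

Lemma mkc_ok a i j o k : dsatl a (mkc i j o k) <-> cmpR o (a i - a j) (IZR k).
Proof.
case: o => /=; rewrite ?dsatl_cons /dsat /= ?opp_IZR;
  split; try (move=> [H1 [H2 _]]); try (move=> [H1 _]); try move=> H;
  try (repeat split; try apply: dsatl_nil); lra.
Qed.

Definition trz (c : zcons X) :=
  match c with ZC1 x o k => mkc (CC x) None o k | ZC2 x y o k => mkc (CC x) (CC y) o k end.

Lemma trz_ok mu c : dsatl (emb mu) (trz c) <-> zsat c mu.
Proof.
case: c => [x o k|x y o k] /=; rewrite mkc_ok //=.
by rewrite Rminus_0_r.
Qed.

Definition boxc : seq (dc V) :=
  List.flat_map (fun x => [:: DC (CC x) None false 1; DC None (CC x) false 0]) (enum X).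

Lemma box_ok mu : dsatl (emb mu) boxc <-> in_unit mu.
Proof.
split=> [H x|H c].
  have Hx : List.In x (enum X) by apply: in_list; rewrite mem_enum.
  have H1 : dsat (emb mu) (DC (CC x) None false 1).
    by apply: H; apply/List.in_flat_map; exists x; split=> //; left.
  have H2 : dsat (emb mu) (DC None (CC x) false 0).
    by apply: H; apply/List.in_flat_map; exists x; split=> //; right; left.
  move: H1 H2; rewrite /dsat /=; lra.
move/List.in_flat_map; case=> x [_ [<-|[<-|[]]]]; have := H x; rewrite /dsat /=; lra.
Qed.

Definition noT (S : seq (dc V)) := forall c, List.In c S -> di c != T0 /\ dj c != T0.
Definition rep (P : (X -> R) -> Prop) :=
  exists S, noT S /\ forall mu, P mu <-> dsatl (emb mu) S.

Lemma noT_app S1 S2 : noT S1 -> noT S2 -> noT (S1 ++ S2).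
Proof. by move=> H1 H2 c Hc; case: (List.in_app_or _ _ _ Hc) => [/H1|/H2]. Qed.

Lemma rep_ext P Q : (forall mu, P mu <-> Q mu) -> rep P -> rep Q.
Proof. move=> E [S [HS H]]; exists S; split=> // mu; rewrite -E; exact: H. Qed.

Lemma rep_and P Q : rep P -> rep Q -> rep (fun mu => P mu /\ Q mu).
Proof.
move=> [S1 [N1 H1]] [S2 [N2 H2]]; exists (S1 ++ S2); split; first exact: noT_app.
by move=> mu; rewrite dsatl_app H1 H2.
Qed.

Lemma rep_unit : rep (@in_unit X).
Proof.
exists boxc; split; last by move=> mu; rewrite box_ok.
by move=> c; move/List.in_flat_map; case=> x [_ [<-|[<-|[]]]].
Qed.

Lemma zone_rep P : is_zone1 P -> rep P.
Proof.
move=> [cs [_ H]]; apply: (rep_ext (fun mu => iff_sym (H mu))); apply: rep_and; first exact: rep_unit.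
exists (List.flat_map trz cs); split.
  move=> c; move/List.in_flat_map; case=> z [_]; case: z => [x o k|x y o k];
  by case: o => /= [[<-|[]]|[<-|[]]|[<-|[<-|[]]]|[<-|[]]|[<-|[]]].
move=> mu; split=> [Hc c|Hc z Hz]; first (move/List.in_flat_map; case=> z [Hz Hcz]).
  by have /trz_ok Hs := Hc z Hz; apply: Hs.
by apply/trz_ok => c Hcz; apply: Hc; apply/List.in_flat_map; exists z.
Qed.

Definition falsez (x : X) : zcons X := ZC1 x CLt (-1).
Definition back (c : dc V) : seq (zcons X) :=
  let k := dk c in let s := ds c in
  match di c, dj c with
  | Some (Some x), Some (Some y) =>
      if (2 <=? k)%Z then [::] else if (k <=? -2)%Z then [:: falsez x]
      else [:: ZC2 x y (if s then CLt else CLe) k]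
  | Some (Some x), None =>
      if (2 <=? k)%Z then [::] else if (k <=? -2)%Z then [:: falsez x]
      else [:: ZC1 x (if s then CLt else CLe) k]
  | None, Some (Some y) =>
      if (2 <=? k)%Z then [::] else if (k <=? -2)%Z then [:: falsez y]
      else [:: ZC1 y (if s then CGt else CGe) (- k)]
  | _, _ => [::]
  end.

Lemma back_okc c z : List.In z (back c) -> zcons_ok z.
Proof.
case: c => [[[x|]|] [[y|]|] s k]; rewrite /back /=;
  case: (Z.leb_spec 2 k) => Hk1 //; case: (Z.leb_spec k (-2)) => Hk2 //;
  move=> [<-|[]] /=; lia.
Qed.

Lemma IZR_ge2 k : (2 <= k)%Z -> 2 <= IZR k.
Proof. by move=> H; apply: (IZR_le 2). Qed.
Lemma IZR_lem2 k : (k <= -2)%Z -> IZR k <= -2.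
Proof. by move=> H; apply: (IZR_le _ (-2)). Qed.

Lemma back_ok mu c : in_unit mu -> di c != T0 -> dj c != T0 ->
  ~ (di c = None /\ dj c = None) ->
  (dsat (emb mu) c <-> forall z, List.In z (back c) -> zsat z mu).
Proof.
move=> Hu; case: c => [[[x|]|] [[y|]|] s k] //= _ _ HN; rewrite /back /dsat /=;
  try (by exfalso; apply: HN).
all: case: (Z.leb_spec 2 k) => Hk1; [have Hb := IZR_ge2 Hk1 |
       case: (Z.leb_spec k (-2)) => Hk2; [have Hb := IZR_lem2 Hk2|]].
all: try (have Hx := Hu x); try (have Hy := Hu y); rewrite ?opp_IZR.
all: try (split=> [H z []|H]; case: s H => /=; (intros; lra)).
all: try (split=> [H z [<-|[]]|H]; [case: s H => /=; rewrite /zsat /cmpR ?opp_IZR; (intros; lra)|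
          have := H _ (or_introl erefl); clear H; case: s => /=; rewrite /zsat /cmpR ?opp_IZR; (intros; lra)]).
Qed.

Lemma rep_zone P : rep P -> (forall mu, P mu -> in_unit mu) -> (exists mu, P mu) -> is_zone1 P.
Proof.
move=> [S [HS H]] Hu [mu0 H0].
exists (List.flat_map back S); split.
  by move=> z; move/List.in_flat_map; case=> c [_ /back_okc].
have HNN : forall c mu, List.In c S -> di c = None -> dj c = None -> dsat (emb mu) c.
  move=> c mu Hc Hi Hj; have := (proj1 (H mu0) H0) c Hc.
  by rewrite /dsat Hi Hj.
move=> mu; split=> [Hm|[Hm Hz]].
  split; first exact: Hu.
  move=> z; move/List.in_flat_map; case=> c [Hc Hzc].
  have Hd := (proj1 (H mu) Hm) c Hc.
  have [N1 N2] := HS c Hc.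
  case: (di c =P None) => Hi; case: (dj c =P None) => Hj;
    [by move: Hzc; rewrite /back Hi Hj| | |];
  (have HN : ~ (di c = None /\ dj c = None) by tauto);
  exact: (proj1 (back_ok (Hu _ Hm) N1 N2 HN) Hd).
apply/H => c Hc; have [N1 N2] := HS c Hc.
case: (di c =P None) => Hi; case: (dj c =P None) => Hj; [exact: HNN| | |];
(have HN : ~ (di c = None /\ dj c = None) by tauto);
apply: (proj2 (back_ok Hm N1 N2 HN));
  by move=> z Hzc; apply: Hz; apply/List.in_flat_map; exists c.
Qed.
End Zones.


Section Ops.
Variable X : finType.
Notation V := (option (option X)).

Lemma CC_eq (y x : X) : (CC y == CC x) = (y == x).
Proof. by rewrite /CC; apply/eqP/eqP => [[]|->]. Qed.

Lemma rep_reset1 (P : (X -> R) -> Prop) x : rep P ->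
  rep (fun mu => exists nu, P nu /\ forall y, mu y = if y == x then 0 else nu y).
Proof.
move=> [S [HS H]].
have Hz : (None : V) != CC x by [].
exists ([:: DC (CC x) None false 0; DC None (CC x) false 0] ++ elim None (CC x) S); split.
  apply: noT_app; first by move=> c [<-|[<-|[]]].
  move=> c Hc; have := @elim_vars _ (fun v : V => v != T0 X) None (CC x) S isT HS c Hc. by [].
move=> mu; split=> [[nu [Pnu Hmu]]|].
  apply/dsatl_app; split.
    by move=> c [<-|[<-|[]]]; rewrite /dsat /= Hmu eqxx; lra.
  apply: (elim_sound (r := nu x)) => //.
  apply: dsatl_ext (proj1 (H nu) Pnu) => -[[y|]|] //=.
  rewrite /updV; change (Some (Some y)) with (CC y); rewrite CC_eq.
  by case: (y =P x) => [->|/eqP/negbTE Hn] //=; rewrite Hmu Hn.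
move/dsatl_app => [H0 H1].
have Hmx : mu x = 0.
  have := H0 _ (or_introl erefl); have := H0 _ (or_intror (or_introl erefl)).
  rewrite /dsat /=; lra.
have [r Hr] := elim_complete Hz H1.
exists (fun y => if y == x then r else mu y); split.
  apply/H; apply: dsatl_ext Hr => -[[y|]|] //=.
by move=> y; case: (y =P x) => [->|].
Qed.

Lemma rep_resetL (P : (X -> R) -> Prop) (l : seq X) : rep P ->
  rep (fun mu => exists nu, P nu /\ forall y, mu y = if y \in l then 0 else nu y).
Proof.
move=> HP; elim: l => [|x l IH].
  apply: rep_ext HP => mu; split=> [Pm|[nu [Pn E]]]; first by exists mu.
  by have -> : mu = nu by apply: functional_extensionality => y; rewrite E.
apply: rep_ext (rep_reset1 x IH) => mu; split.
  move=> [nu [[nu0 [P0 E0]] E]]; exists nu0; split=> // y.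
  by rewrite E E0 in_cons; case: (y == x).
move=> [nu0 [P0 E]]; exists (fun y => if y \in l then 0 else nu0 y); split.
  by exists nu0.
by move=> y; rewrite E in_cons; case: (y == x).
Qed.

Lemma rep_vreset (P : (X -> R) -> Prop) lam : rep P ->
  rep (fun mu => exists nu, P nu /\ forall y, mu y = vreset nu lam y).
Proof.
move=> HP; apply: rep_ext (rep_resetL (enum lam) HP) => mu.
by split=> -[nu [Pn E]]; exists nu; split=> // y; rewrite E /vreset mem_enum.
Qed.

Lemma INR_Z n : INR n = IZR (Z.of_nat n).
Proof. exact: INR_IZR_INZ. Qed.

Lemma rep_guard (u : ivec X) g : rep (fun mu => gsat g (iplus u mu)).
Proof.
elim: g => [|x k|x k|x k|g1 IH1 g2 IH2] /=.
- by exists [::]; split=> // mu; split=> // _ c [].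
- exists [:: DC (CC x) None true (Z.of_nat k - Z.of_nat (u x))]; split; first by move=> c [<-|[]].
  move=> mu; rewrite dsatl_cons /dsat /iplus /= minus_IZR !INR_Z.
  split=> [H|[H _]]; [split; [lra|exact: dsatl_nil]|lra].
- exists [:: DC (CC x) None false (Z.of_nat k - Z.of_nat (u x));
            DC None (CC x) false (Z.of_nat (u x) - Z.of_nat k)].
  split; first by move=> c [<-|[<-|[]]].
  move=> mu; rewrite !dsatl_cons /dsat /iplus /= !minus_IZR !INR_Z.
  split=> [H|[H1 [H2 _]]]; [split; [lra|split; [lra|exact: dsatl_nil]]|lra].
- exists [:: DC None (CC x) true (Z.of_nat (u x) - Z.of_nat k)]; split; first by move=> c [<-|[]].
  move=> mu; rewrite dsatl_cons /dsat /iplus /= minus_IZR !INR_Z.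
  split=> [H|[H _]]; [split; [lra|exact: dsatl_nil]|lra].
- exact: rep_and.
Qed.

Lemma rep_zero : rep (@zero_zone X).
Proof.
exists (List.flat_map (fun x => [:: DC (CC x) None false 0; DC None (CC x) false 0]) (enum X)).
split.
  by move=> c; move/List.in_flat_map; case=> x [_ [<-|[<-|[]]]].
move=> mu; split=> [H c|H x].
  by move/List.in_flat_map; case=> x [_ [<-|[<-|[]]]]; rewrite /dsat /= H; lra.
have Hx : List.In x (enum X) by apply: in_list; rewrite mem_enum.
have H1 : dsat (emb mu) (DC (CC x) None false 0).
  by apply: H; apply/List.in_flat_map; exists x; split=> //; left.
have H2 : dsat (emb mu) (DC None (CC x) false 0).
  by apply: H; apply/List.in_flat_map; exists x; split=> //; right; left.
move: H1 H2; rewrite /dsat /=; lra.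
Qed.

Definition sh (v : V) : V := if v is None then T0 X else v.
Definition shc (c : dc V) := DC (sh (di c)) (sh (dj c)) (ds c) (dk c).

Lemma sh_key (nu : X -> R) t v :
  updV (emb nu) (T0 X) t (sh v) = emb (fun x => nu x - t) v + t.
Proof. by case: v => [[x|]|]; rewrite /updV /=; lra. Qed.

Lemma shc_key nu t c :
  dsat (updV (emb nu) (T0 X) t) (shc c) <-> dsat (emb (fun x => nu x - t)) c.
Proof.
case: c => i j s k; rewrite /dsat /shc /= !sh_key.
set A := emb _ i; set B := emb _ j; clearbody A B; case: s; split=> Hq; lra.
Qed.

Lemma rep_future (P : (X -> R) -> Prop) : rep P ->
  rep (fun nu => exists nu0 t, P nu0 /\ 0 <= t /\ forall x, nu x = nu0 x + t).
Proof.
move=> [S [HS H]].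
have Hz : (None : V) != T0 X by [].
exists (elim None (T0 X) (DC None (T0 X) false 0 :: List.map shc S)); split.
  by move=> c Hc; have [? ?] := elim_nov Hz Hc.
move=> nu; split=> [[nu0 [t [P0 [Ht E]]]]|Hs].
  apply: (elim_sound (r := t)) => //.
  apply/dsatl_cons; split; first by rewrite /dsat /updV /=; lra.
  have Hd : dsatl (emb (fun x => nu x - t)) S.
    apply: dsatl_ext (proj1 (H nu0) P0) => -[[x|]|] //=.
    by rewrite E; lra.
  move=> c; move/List.in_map_iff; case=> c0 [<- Hc0].
  by apply/shc_key; apply: Hd.
have [r /dsatl_cons [Hr0 Hr]] := elim_complete Hz Hs.
exists (fun x => nu x - r), r; split; last split.
- apply/H => c Hc; apply/shc_key; apply: Hr; exact: List.in_map.
- by move: Hr0; rewrite /dsat /updV /=; lra.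
- by move=> x; lra.
Qed.

Lemma zone_unit (Zn : (X -> R) -> Prop) mu : is_zone1 Zn -> Zn mu -> in_unit mu.
Proof. by move=> [cs [_ H]] /H []. Qed.

Lemma zone_future (Zn : (X -> R) -> Prop) :
  is_zone1 Zn -> (exists nu, future Zn nu) -> is_zone1 (future Zn).
Proof.
move=> HZ Hne; apply: rep_zone => //; last by move=> mu [].
exact: (rep_and (@rep_unit X) (rep_future (zone_rep HZ))).
Qed.

Lemma vreset_unit (nu : X -> R) lam : in_unit nu -> in_unit (vreset nu lam).
Proof. by move=> H y; rewrite /vreset; case: (y \in lam) => //; lra. Qed.

Lemma zone_gr (Zn : (X -> R) -> Prop) u g lam :
  is_zone1 Zn -> (exists nu, guard_reset Zn u g lam nu) -> is_zone1 (guard_reset Zn u g lam).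
Proof.
move=> HZ Hne; apply: rep_zone => //.
  apply: (rep_ext _ (rep_vreset lam (rep_and (zone_rep HZ) (rep_guard u g)))) => mu.
  by split=> -[nu0 H]; exists nu0; tauto.
move=> mu [nu0 [Z0 [_ E]]] y; rewrite E; exact: vreset_unit (zone_unit HZ Z0) y.
Qed.

Lemma zone_wrap (Zn : (X -> R) -> Prop) x :
  is_zone1 Zn -> (exists nu, wrap Zn x nu) -> is_zone1 (wrap Zn x).
Proof.
move=> HZ Hne; apply: rep_zone => //.
  have H1 : rep (fun mu : X -> R => mu x = 1).
    exists [:: DC (CC x) None false 1; DC None (CC x) false (-1)]; split.
      by move=> c [<-|[<-|[]]].
    move=> mu; rewrite !dsatl_cons /dsat /=.
    split=> [H|[H1 [H2 _]]]; [split; [lra|split; [lra|exact: dsatl_nil]]|lra].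
  apply: (rep_ext _ (rep_vreset [set x] (rep_and (zone_rep HZ) H1))) => mu.
  by split=> -[nu0 H]; exists nu0; tauto.
move=> mu [nu0 [Z0 [_ E]]] y; rewrite E; exact: vreset_unit (zone_unit HZ Z0) y.
Qed.

Lemma zone_zero : is_zone1 (@zero_zone X).
Proof.
apply: rep_zone; first exact: rep_zero.
  by move=> mu H x; rewrite H; lra.
by exists (@val0 X).
Qed.
End Ops.


Section Sim.
Variable X : finType.
Variable L : finType.
Variable A : timed_automaton X L.

Lemma r_to_ta l0 gam s :
  r_reach A (RState l0 (@ivec0 X) (@zero_zone X) gam) s ->
  forall mu nu, rs_zone s mu -> (forall x, nu x = iplus (rs_int s) mu x) ->
  ta_reach A (l0, @val0 X) (rs_loc s, nu).
Proof.
move=> H; have {H} := @clos_rt_rtn1 _ _ _ _ H; elim=> [|y z Hs _ IH] mu nu /=.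
  move=> Hmu E; have -> : nu = @val0 X.
    apply: functional_extensionality => x; rewrite E /iplus Hmu /ivec0 /val0 /=; lra.
  exact: rt_refl.
case: Hs IH => [a] []; clear y z.
- move=> l u Zn g Zn' _ HE IH /= /HE [_ [mu0 [t [Z0 [Ht Emu]]]]] E.
  apply: rt_trans (IH mu0 (iplus u mu0) Z0 (fun _ => erefl)) _.
  have -> : nu = vdelay (iplus u mu0) t.
    by apply: functional_extensionality => x; rewrite E /vdelay /iplus Emu; lra.
  apply: rt_step; exact: TA_delay.
- move=> l u Zn g x Zn' _ HE IH /= /HE [mu0 [Z0 [H1 Emu]]] E.
  apply: (IH mu0) => // y; rewrite E /iplus Emu /vreset /iincr in_set1.
  case: (y =P x) => [->|/eqP/negbTE Hn]; [rewrite S_INR H1; cbn [rs_int]; lra|by rewrite ?Hn].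
- move=> l u Zn g phi lam l' g' Zn' Hin _ _ HE IH /= /HE [mu0 [Z0 [Hg Emu]]] E.
  apply: rt_trans (IH mu0 (iplus u mu0) Z0 (fun _ => erefl)) _.
  have -> : nu = vreset (iplus u mu0) lam.
    apply: functional_extensionality => y; rewrite E /iplus Emu /vreset /ireset.
    case: (y \in lam); rewrite /=; lra.
  apply: rt_step; exact: (TA_edge Hin Hg).
Qed.

Lemma gsat_ext g (a b : X -> R) : (forall x, a x = b x) -> gsat g a -> gsat g b.
Proof. by move=> E; elim: g => //= [x k|x k|x k|g1 IH1 g2 IH2]; rewrite ?E //; tauto. Qed.

Lemma seq_refl (Z : valuation X -> Prop) : set_eq Z Z.
Proof. by move=> ?. Qed.

Definition ltb (a b : R) : bool := if Rlt_dec a b then true else false.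
Lemma ltbE a b : ltb a b = true <-> a < b.
Proof. by rewrite /ltb; case: Rlt_dec. Qed.

Lemma rstep_reach s0 s1 s2 a : r_reach A s0 s1 -> r_step A s1 a s2 -> r_reach A s0 s2.
Proof. by move=> H1 H2; apply: rt_trans H1 (rt_step _ _ _ _ (ex_intro _ a H2)). Qed.

Lemma chunk s0 l gam : forall n u Zn mu d, 0 <= d <= 1 ->
  #|[set x | ltb 1 (mu x + d)]| = n -> is_zone1 Zn -> Zn mu ->
  r_reach A s0 (RState l u Zn gam) ->
  exists u' Zn' mu', is_zone1 Zn' /\ Zn' mu' /\
    (forall x, iplus u mu x + d = iplus u' mu' x) /\ r_reach A s0 (RState l u' Zn' gam).
Proof.
elim=> [|n IH] u Zn mu d Hd Hn HZ Zmu Hr; have Hu := zone_unit HZ Zmu.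
  have Hle : forall x, mu x + d <= 1.
    move=> x; apply: Rnot_lt_le => Hx; move/eqP: Hn; rewrite cards_eq0 => /eqP E.
    have : x \in [set x | ltb 1 (mu x + d)] by rewrite inE; apply/ltbE.
    by rewrite E inE.
  have Hf : future Zn (fun x => mu x + d).
    split; first by move=> x; have := Hu x; have := Hle x; lra.
    by exists mu, d; split=> //; split=> //; lra.
  have HZf := zone_future HZ (ex_intro _ _ Hf).
  exists u, (future Zn), (fun x => mu x + d); split; first exact: HZf.
  split=> //; split; first by move=> x; rewrite /iplus; lra.
  exact: rstep_reach Hr (R_delay A l u gam HZf (seq_refl _)).
have [y0 Hy0] : exists y0, y0 \in [set x | ltb 1 (mu x + d)].
  by apply/set0Pn; rewrite -card_gt0 Hn.
have [m [_ Hm]] : exists m, List.In m (enum X) /\ forall p, List.In p (enum X) -> mu p <= mu m.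
  apply: (@list_max _ (fun a b => mu b <= mu a) _ _ _ _ y0).
  - by move=> x; lra.
  - by move=> x y z; lra.
  - by move=> x y; case: (Rle_lt_dec (mu x) (mu y)) => H; [right|left]; lra.
  - by apply: in_list; rewrite mem_enum.
have {}Hm : forall p, mu p <= mu m by move=> p; apply: Hm; apply: in_list; rewrite mem_enum.
have Hy0' : 1 < mu y0 + d by move: Hy0; rewrite inE => /ltbE.
have Hm1 := Hm y0.
have [del Edel] : exists del, del = 1 - mu m by eexists.
have Hdel : 0 <= del <= 1 by have := Hu m; lra.
pose mu1 := fun x => mu x + del.
have Hf : future Zn mu1.
  split; first by move=> x; have := Hu m; have := Hu x; have := Hm x; rewrite /mu1 => ? ? ?; lra.
  by exists mu, del; split=> //; split=> //; lra.
have HZ1 := zone_future HZ (ex_intro _ _ Hf).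
have Hr1 := rstep_reach Hr (R_delay A l u gam HZ1 (seq_refl _)).
pose mu2 := vreset mu1 [set m].
have Hw : wrap (future Zn) m mu2.
  by exists mu1; split=> //; split=> //; rewrite /mu1; lra.
have HZ2 := zone_wrap HZ1 (ex_intro _ _ Hw).
have Hr2 := rstep_reach Hr1 (R_wrap _ _ _ _ HZ2 (seq_refl _)).
have Hd' : 0 <= d - del <= 1 by lra.
have Hn' : #|[set x | ltb 1 (mu2 x + (d - del))]| = n.
  have Hmem : m \in [set x | ltb 1 (mu x + d)] by rewrite inE; apply/ltbE; lra.
  have : #|[set x | ltb 1 (mu x + d)] :\ m| = n.
    by move: Hn; rewrite (cardsD1 m) Hmem => -[].
  move=> <-; apply: eq_card => x; rewrite !inE /mu2 /vreset /mu1 in_set1.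
  case: (x =P m) => [->|_] /=.
    by apply/negbTE/negP => /ltbE; lra.
  by congr ltb; lra.
have [u' [Zn' [mu' [HZ' [Zmu' [E Hr']]]]]] := IH (iincr u m) _ mu2 (d - del) Hd' Hn' HZ2 Hw Hr2.
exists u', Zn', mu'; split=> //; split=> //; split=> // x.
rewrite -E /iplus /mu2 /vreset /mu1 /iincr in_set1.
case: (x =P m) => [->|/eqP/negbTE Hxm]; [rewrite S_INR; lra|lra].
Qed.

Lemma delay_sim s0 l gam : forall N d u Zn mu, 0 <= d <= INR N -> is_zone1 Zn -> Zn mu ->
  r_reach A s0 (RState l u Zn gam) ->
  exists u' Zn' mu', is_zone1 Zn' /\ Zn' mu' /\
    (forall x, iplus u mu x + d = iplus u' mu' x) /\ r_reach A s0 (RState l u' Zn' gam).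
Proof.
elim=> [|N IH] d u Zn mu Hd HZ Zmu Hr.
  have Hd1 : 0 <= d <= 1 by move: Hd; rewrite /=; lra.
  exact: chunk Hd1 erefl HZ Zmu Hr.
case: (Rle_lt_dec d 1) => H1.
  have Hd1 : 0 <= d <= 1 by lra.
  exact: chunk Hd1 erefl HZ Zmu Hr.
have H01 : 0 <= 1 <= 1 by lra.
have [u1 [Zn1 [mu1 [HZ1 [Zmu1 [E1 Hr1]]]]]] := chunk H01 erefl HZ Zmu Hr.
have Hd' : 0 <= d - 1 <= INR N by move: Hd; rewrite S_INR; lra.
have [u' [Zn' [mu' [HZ' [Zmu' [E' Hr']]]]]] := IH _ _ _ _ Hd' HZ1 Zmu1 Hr1.
exists u', Zn', mu'; split=> //; split=> //; split=> // x.
by rewrite -E' -E1; lra.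
Qed.

Lemma ta_to_r l0 s : ta_reach A (l0, @val0 X) s -> forall gam,
  exists gam0 u Zn mu, is_zone1 Zn /\ Zn mu /\ (forall x, s.2 x = iplus u mu x) /\
    r_reach A (RState l0 (@ivec0 X) (@zero_zone X) gam0) (RState s.1 u Zn gam).
Proof.
move=> H; have {H} := @clos_rt_rtn1 _ _ _ _ H; elim=> [|y z Hs _ IH] gam.
  exists gam, (@ivec0 X), (@zero_zone X), (@val0 X); split; first exact: zone_zero.
  split; first by move=> x.
  split; first by move=> x; rewrite /iplus /val0 /ivec0 /=; lra.
  exact: rt_refl.
case: Hs IH => [l nu d Hd|l g lam l' nu Hin Hg] IH.
  have [gam0 [u [Zn [mu [HZ [Zmu [E Hr]]]]]]] := IH gam.
  have [N HN] : exists N : nat, d <= INR N.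
    exists (Z.to_nat (up d)); have [Ha _] := archimed d.
    have H0 : (0 <= up d)%Z by apply: le_IZR; lra.
    rewrite INR_IZR_INZ Z2Nat.id //; lra.
  have Hd' : 0 <= d <= INR N by lra.
  have [u' [Zn' [mu' [HZ' [Zmu' [E' Hr']]]]]] := delay_sim Hd' HZ Zmu Hr.
  exists gam0, u', Zn', mu'; split=> //; split=> //; split=> // x.
  by rewrite /= /vdelay -E'; have := E x; rewrite /=; lra.
have [gam0 [u [Zn [mu [HZ [Zmu [E Hr]]]]]]] := IH (gam :|: lam).
have Hg' : gsat g (iplus u mu) := gsat_ext E Hg.
have Hgr : guard_reset Zn u g lam (vreset mu lam) by exists mu.
have HZ' := zone_gr HZ (ex_intro _ _ Hgr).
exists gam0, (ireset u lam), (guard_reset Zn u g lam), (vreset mu lam); split=> //; split=> //; split.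
  move=> w; have := E w; rewrite /= /vreset /ireset /iplus => Ew.
  by case: (w \in lam); rewrite /=; lra.
exact: rstep_reach Hr (R_edge Hin erefl HZ' (seq_refl _)).
Qed.
End Sim.

Theorem mainTheorem7 (X : finType) (L : finType) (A : timed_automaton X L) (l0 l : L)
  (nu : X -> R) :
  (val_nonneg nu /\ ta_reach A (l0, @val0 X) (l, nu)) <->
  (exists Zn : (X -> R) -> Prop, is_zone1 Zn /\
     exists (gam : {set X}) (mu : X -> R) (u : X -> nat),
       Zn mu /\ (forall x, nu x = iplus u mu x) /\
       r_reach A (RState l0 (@ivec0 X) (@zero_zone X) gam) (RState l u Zn set0)).
Proof.
split.
  move=> [_ Hr].
  have [gam0 [u [Zn [mu [HZ [Zmu [E Hr']]]]]]] := ta_to_r Hr set0.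
  by exists Zn; split=> //; exists gam0, mu, u.
move=> [Zn [HZ [gam [mu [u [Zmu [E Hr]]]]]]]; split.
  move=> x; rewrite E /iplus; have := zone_unit HZ Zmu x; have := pos_INR (u x); lra.
exact: (r_to_ta Hr Zmu E).
Qed.
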